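(* Let $q$ be a prime power, $n\ge 1$, and let $f(x)$ be a monic irreducible polynomial of degree $2n$ over $\mathbb{F}_q$ of order $e(q^n+1)$ for some positive integer $e$. (a) Let $\alpha\in\mathbb{F}_{q^{2n}}$ be a zero of $f(x)$ and set $\beta=\alpha^e$. Then $x^{q^n+1}+x^{q^n}-(\beta^{q^n}+\beta+1)x+1$ is an irreducible polynomial over $\mathbb{F}_{q^n}$. (b) Let $R(x)$ be the remainder of $x^{eq^n}+x^e+1$ modulo $f(x)$, and let $\psi(x)=\sum_{u=0}^n\psi_u x^u\in\mathbb{F}_q[x]$ be the monic nonzero polynomial of least degree satisfying $\sum_{u=0}^{n}\psi_u (R(x))^u\equiv 0\pmod{f(x)}$. Then $\psi(x)$ is an irreducible polynomial of degree $n$ over $\mathbb{F}_q$. (c) With $\psi$ as in (b), the polynomial $$F(x)=x^n\,\psi\!\left(\frac{x^{q^n+1}+x^{q^n}+1}{x}\right)$$ is an irreducible polynomial of degree $n(q^n+1)$ over $\mathbb{F}_q$.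
   Context: The order of a polynomial $P(x)\in\mathbb{F}_q[x]$ with $P(0)\ne0$ is the least positive integer $t$ such that $P(x)$ divides $x^t-1$; for irreducible $P$ it equals the multiplicative order of any root of $P$. *)

(* Defs.v *)
From HB Require Import structures.
From mathcomp Require Import all_boot all_order all_algebra all_field.
Set Implicit Arguments. Unset Strict Implicit. Unset Printing Implicit Defensive.
Import GRing.Theory.
Local Open Scope ring_scope.

Definition poly_order (R : fieldType) (f : {poly R}) (t : nat) : Prop :=
  (0 < t)%N /\ f %| 'X^t - 1 /\
  (forall s : nat, (0 < s)%N -> f %| 'X^s - 1 -> (t <= s)%N).

(* x^n * psi(Q(x)/x) = \sum_{u=0}^n psi_u Q(x)^u x^(n-u) *)
Definition homog_comp (R : ringType) (n : nat) (psi Q : {poly R}) : {poly R} :=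
  \sum_(u < n.+1) psi`_u *: (Q ^+ u * 'X^(n - u)).

(* Main.v *)
Require Import Defs.
From HB Require Import structures.
From mathcomp Require Import all_boot all_order all_algebra all_field.
From Stdlib Require Import Ring Lia.
Set Implicit Arguments. Unset Strict Implicit. Unset Printing Implicit Defensive.
Import GRing.Theory.
Local Open Scope ring_scope.
Section RingId.
Variables (T : Type) (zero one : T) (add mul sub : T -> T -> T) (opp : T -> T).
Hypothesis Rth : ring_theory zero one add mul sub opp (@eq T).
Add Ring TR : Rth.
Lemma idY (b b' u t : T) : sub (sub (mul (mul b (sub u b)) (sub t b')) (mul (sub u b') (sub t b))) zero =
   add (mul (sub b one) (add (sub (add (mul u t) u) (mul (add (add b' b) one) t)) one))
       (mul (sub (sub (add t b) u) one) (sub (mul b b') one)).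
Proof. ring. Qed.
Lemma idGb (b b' : T) :
  add (sub (add (mul b b') b') (mul (add (add b' b) one) b)) one =
  add (mul (add b one) (sub b' b)) (sub one (mul b b')).
Proof. ring. Qed.
Lemma idGb' (b b' : T) :
  add (sub (add (mul b b') b) (mul (add (add b' b) one) b')) one =
  add (mul (add b' one) (sub b b')) (sub one (mul b b')).
Proof. ring. Qed.
Lemma idconj (s s' t t' : T) :
  mul (sub s t) (sub (mul s t) one) =
  add (sub (mul (mul s t) (sub (sub (add s s') t) t')) (mul t (sub (mul s s') one)))
      (mul s (sub (mul t t') one)).
Proof. ring. Qed.
Lemma idstep (bk b D1 Ek E1 Dk T' T0 : T) :
  sub (mul (mul (mul (mul bk b) D1) T') Ek) (mul (mul E1 T0) Ek) =
  add (mul (mul bk T') (sub (mul (mul b D1) Ek) (mul E1 Dk)))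
      (mul E1 (sub (mul (mul bk Dk) T') (mul Ek T0))).
Proof. ring. Qed.
Lemma idterm (c Qq z y y' : T) :
  sub (mul (mul c Qq) z) (mul (mul y z) (mul c (mul Qq y'))) =
  mul (mul (mul c Qq) z) (sub one (mul y y')).
Proof. ring. Qed.
End RingId.

Section Frob.
Variables (C : fieldType) (N : nat).
Hypothesis hN : [pchar C].-nat N.

Definition frobN (_ : [pchar C].-nat N) (x : C) := x ^+ N.

Lemma frobN_add : nmod_morphism (frobN hN).
Proof.
split; first by rewrite /frobN expr0n; case: N hN => //.
by move=> x y; rewrite /frobN exprDn_pchar.
Qed.

Lemma frobN_mul : monoid_morphism (frobN hN).
Proof. by split; [rewrite /frobN expr1n | move=> x y; rewrite /frobN exprMn]. Qed.

HB.instance Definition _ := GRing.isNmodMorphism.Build C C (frobN hN) frobN_add.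
HB.instance Definition _ := GRing.isMonoidMorphism.Build C C (frobN hN) frobN_mul.

Lemma frobN_inj (x y : C) : x ^+ N = y ^+ N -> x = y.
Proof. exact: (fmorph_inj (frobN hN)). Qed.

Lemma frobN_horner (P : {poly C}) x :
  (forall i, P`_i ^+ N = P`_i) -> P.[x] ^+ N = P.[x ^+ N].
Proof.
move=> hP; have E : map_poly (frobN hN) P = P.
  by apply/polyP => i; rewrite coef_map /= /frobN hP.
rewrite -[in RHS]E; change (frobN hN P.[x] = (map_poly (frobN hN) P).[frobN hN x]).
by rewrite horner_map.
Qed.
End Frob.

Lemma pnat_gt0' (pi : nat_pred) n : pi.-nat n -> (0 < n)%N.
Proof. by case/andP. Qed.

Lemma frob_inj (C : fieldType) (N : nat) (hN : [pchar C].-nat N) (x y : C) :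
  x ^+ N = y ^+ N -> x = y.
Proof. exact: (fmorph_inj (frobN hN)). Qed.

Lemma frob_root (C : fieldType) (N : nat) (hN : [pchar C].-nat N) (P : {poly C}) x :
  (forall i, P`_i ^+ N = P`_i) -> root P x -> root P (x ^+ N).
Proof.
move=> hP /rootP Px; apply/rootP; rewrite -(frobN_horner hN) // Px expr0n.
by case: N hN {hP} => //.
Qed.

Lemma frob_root_iter (C : fieldType) (N : nat) (hN : [pchar C].-nat N) (P : {poly C}) x k :
  (forall i, P`_i ^+ N = P`_i) -> root P x -> root P (x ^+ (N ^ k)).
Proof.
move=> hP Px; elim: k => [|k IH]; first by rewrite expn0 expr1.
by rewrite expnSr exprM; apply: (frob_root hN).
Qed.

Lemma orbit_uniq (C : fieldType) (N : nat) (hN : [pchar C].-nat N) (x : C) m :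
  (forall k, (0 < k < m)%N -> x ^+ (N ^ k) != x) -> uniq (mkseq (fun k => x ^+ (N ^ k)) m).
Proof.
move=> hx.
rewrite map_inj_in_uniq ?iota_uniq // => i l; rewrite !mem_iota !add0n => /andP[_ hi] /andP[_ hl].
wlog lt_il : i l hi hl / (i <= l)%N.
  move=> W E; case: (leqP i l) => [le|lt]; first exact: W.
  by apply/esym/W => //; apply: ltnW.
move=> E; apply/eqP; rewrite eqn_leq lt_il /= leqNgt; apply/negP => lt_li.
have hNi : [pchar C].-nat (N ^ i)%N by rewrite pnatX hN.
have El : expn N l = muln (expn N (l - i)) (expn N i) by rewrite -expnD subnK.
move: E; rewrite El exprM => /(frob_inj hNi) /esym /eqP; apply/negP/hx.
by rewrite subn_gt0 lt_li /=; apply: leq_ltn_trans (leq_subr _ _) hl.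
Qed.

Lemma orbit_size (C : fieldType) (N : nat) (hN : [pchar C].-nat N) (P : {poly C}) x m :
  P != 0 -> (forall i, P`_i ^+ N = P`_i) -> root P x ->
  (forall k, (0 < k < m)%N -> x ^+ (N ^ k) != x) -> (m < size P)%N.
Proof.
move=> P0 hP Px hx.
have -> : m = size (mkseq (fun k => x ^+ (N ^ k)) m) by rewrite size_mkseq.
apply: max_poly_roots => //; last exact: orbit_uniq.
by apply/allP => y /mapP [k _ ->]; apply: frob_root_iter.
Qed.

Lemma mc_ring (R : comRingType) : @ring_theory R 0 1 +%R *%R (fun x y => x - y) -%R eq.
Proof.
split=> //; [exact: add0r|exact: addrC|exact: addrA|exact: mul1r|exact: mulrC|exact: mulrA|exact: mulrDl|exact: subrr].
Qed.

Lemma irr_root_dvd (F T : fieldType) (phi : {rmorphism F -> T}) (f h : {poly F}) a :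
  irreducible_poly f -> root (map_poly phi f) a -> root (map_poly phi h) a -> f %| h.
Proof.
move=> irr /rootP fa /rootP ha; apply: contraTT isT => nd.
move: nd; rewrite -irreducible_poly_coprime // => /Bezout_eq1_coprimepP [u hu].
have := congr1 (fun p => (map_poly phi p).[a]) hu => /=.
rewrite rmorphD !rmorphM /= hornerD !hornerM fa ha !mulr0 add0r rmorph1 hornerC.
by move/eqP; rewrite eq_sym oner_eq0.
Qed.

Lemma fixed_in_image (F : finFieldType) (T : fieldType) (phi : {rmorphism F -> T}) (c : T) :
  c ^+ #|F| = c -> exists a, phi a = c.
Proof.
move=> hc; case: (boolP [exists a, phi a == c]) => [/existsP [a /eqP]|ne]; first by exists a.
exfalso.
pose rs := c :: map phi (enum F).
pose P : {poly T} := 'X^#|F| - 'X.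
have gt1 := finNzRing_gt1 F.
have sP : size P = #|F|.+1.
  by rewrite /P size_polyDl ?size_polyXn // size_polyN size_polyX ltnS.
have : (size rs < size P)%N.
  apply: max_poly_roots.
  - by rewrite -size_poly_eq0 sP.
  - apply/allP => y; rewrite inE => /predU1P [->|/mapP [a _ ->]];
      rewrite rootE !hornerE ?hc ?subrr //.
    by rewrite -rmorphXn expf_card subrr.
  - rewrite /rs /= map_inj_uniq ?enum_uniq ?andbT; last exact: fmorph_inj.
    apply/mapP => -[a _ ea]; move/existsP: ne; apply; exists a; rewrite ea.
    done.
by rewrite sP /= size_map -cardE ltnn.
Qed.

Section Core.
Variables (C : fieldType) (Q : nat).
Hypothesis hQ : [pchar C].-nat Q.
Hypothesis hQ2 : (1 < Q)%N.
Variable b : C.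
Hypothesis hb1 : b ^+ Q.+1 = 1.
Hypothesis hbm : forall m, (0 < m <= Q)%N -> b ^+ m != 1.

Definition Gv (A t : C) := t ^+ Q.+1 + t ^+ Q - A * t + 1.
Local Notation b' := (b ^+ Q).
Local Notation A := (b ^+ Q + b + 1).

Lemma bb' : b * b' = 1.
Proof. by rewrite -exprS. Qed.

Lemma b'Q : b' ^+ Q = b.
Proof.
have e1 : b' ^+ Q * b' = 1 by rewrite -exprSr exprAC hb1 expr1n.
by rewrite -[LHS]mulr1 -bb' mulrCA e1 mulr1.
Qed.

Lemma AQ : A ^+ Q = A.
Proof.
change (frobN hQ A = A); rewrite !rmorphD rmorph1 /= /frobN b'Q.
by rewrite (addrC b).
Qed.

Lemma Gfrob t : Gv A t = 0 -> Gv A (t ^+ Q) = 0.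
Proof.
move=> h; have : frobN hQ (Gv A t) = 0 by rewrite h /frobN expr0n; case: Q hQ2.
rewrite /Gv rmorphD rmorphB rmorphD rmorphM rmorph1 /= /frobN AQ.
by rewrite -!exprM mulnC.
Qed.

Lemma Gfrob_iter t k : Gv A t = 0 -> Gv A (t ^+ (Q ^ k)) = 0.
Proof.
move=> h; elim: k => [|k IH]; first by rewrite expn0 expr1.
by rewrite expnSr exprM Gfrob.
Qed.

Lemma b2 : b * b != 1.
Proof. by rewrite -expr2 hbm. Qed.

Lemma bN1 : b + 1 != 0.
Proof.
apply: contra b2; rewrite addr_eq0 => /eqP ->; by rewrite mulrNN mulr1.
Qed.

Lemma b'N1 : b' + 1 != 0.
Proof.
apply: contra b2; rewrite addr_eq0 => /eqP e.
have : b * -1 = 1 by rewrite -e bb'.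
by rewrite mulrN1 => /eqP; rewrite eqr_oppLR => /eqP ->; rewrite mulrNN mulr1.
Qed.

Lemma b'b : b' - b != 0.
Proof.
apply: contra b2; rewrite subr_eq0 => /eqP e; by rewrite -{2}e bb'.
Qed.

Lemma Gb : Gv A b != 0.
Proof.
have := @idGb _ _ _ _ _ _ _ (mc_ring C) b b'; rewrite /= bb' subrr addr0 => e.
rewrite /Gv hb1 e mulf_neq0 ?bN1 ?b'b //.
Qed.

Lemma Gb' : Gv A b' != 0.
Proof.
have := @idGb' _ _ _ _ _ _ _ (mc_ring C) b b'; rewrite /= bb' subrr addr0 => e.
rewrite /Gv exprSr b'Q bb' e mulf_neq0 ?b'N1 //.
by rewrite subr_eq0 eq_sym -subr_eq0 b'b.
Qed.

Lemma Yrec t : Gv A t = 0 -> b * (t ^+ Q - b) * (t - b') = (t ^+ Q - b') * (t - b).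
Proof.
move=> h; apply/eqP; rewrite -subr_eq0; apply/eqP.
have := @idY _ _ _ _ _ _ _ (mc_ring C) b b' (t ^+ Q) t; rewrite /= subr0 => ->.
by rewrite bb' subrr mulr0 addr0 -exprSr -/(Gv A t) h mulr0.
Qed.

Lemma Gneq t : Gv A t = 0 -> (t != b) && (t != b').
Proof.
move=> h; apply/andP; split; apply/eqP => e; move: h; rewrite e; apply/eqP.
  exact: Gb.
exact: Gb'.
Qed.

Lemma core t : Gv A t = 0 -> forall k, (0 < k <= Q)%N -> t ^+ (Q ^ k) != t.
Proof.
move=> h.
have key : forall k, b ^+ k * (t ^+ (Q ^ k) - b) * (t - b') = (t ^+ (Q ^ k) - b') * (t - b).
  elim=> [|k IH]; first by rewrite expr0 mul1r expn0 expr1 mulrC.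
  have hk := Gfrob_iter k h.
  have [_ nEk] := andP (Gneq hk).
  have Y := Yrec hk; rewrite -exprM -expnSr in Y.
  have nE : t ^+ (Q ^ k) - b' != 0 by rewrite subr_eq0.
  apply: (mulIf nE).
  apply/eqP; rewrite -subr_eq0; apply/eqP.
  have := @idstep _ _ _ _ _ _ _ (mc_ring C) (b ^+ k) b (t ^+ (Q ^ k.+1) - b)
      (t ^+ (Q ^ k) - b') (t ^+ (Q ^ k.+1) - b') (t ^+ (Q ^ k) - b) (t - b') (t - b).
  rewrite /= -exprSr => ->.
  by rewrite Y IH !subrr !mulr0 addr0.
move=> k hk; apply/eqP => e.
have [nb nb'] := andP (Gneq h).
have hX : (t - b) * (t - b') != 0 by rewrite mulf_neq0 ?subr_eq0.
have := key k; rewrite e -mulrA [RHS]mulrC -[RHS]mul1r => /(mulIf hX) /eqP.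
by apply/negP; apply: hbm.
Qed.
End Core.

Lemma card_pchar_nat (F : finFieldType) (T : fieldType) (phi : {rmorphism F -> T}) :
  [pchar T].-nat #|F|.
Proof.
have [p pr hp] := finPcharP F.
have hpT : p \in [pchar T] by rewrite (rmorph_pchar phi).
rewrite (eq_pnat _ (pcharf_eq hpT)).
have := card_pprimeChar hp => /= ->.
by rewrite pnatX pnat_id.
Qed.

Lemma irr_by_orbit (F : fieldType) (C : closedFieldType) (phi : {rmorphism F -> C})
  (N : nat) (hN : [pchar C].-nat N) (G : {poly F}) :
  (1 < size G)%N -> (forall c, phi c ^+ N = phi c) ->
  (forall x, root (map_poly phi G) x -> forall k, (0 < k < (size G).-1)%N -> x ^+ (N ^ k) != x) ->
  irreducible_poly G.
Proof.
move=> sG hphi horb; split => // d sd dG.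
have G0 : G != 0 by rewrite -size_poly_eq0; case: (size G) sG.
have d0 : d != 0 by apply: contraNneq G0 => e; move: dG; rewrite e dvd0p.
have [x rx] : exists x, root (map_poly phi d) x by apply/closed_rootP; rewrite size_map_poly.
have rG : root (map_poly phi G) x by apply: root_dvdp rx; rewrite dvdp_map.
have := orbit_size hN (P := map_poly phi d) (x := x) (m := (size G).-1).
rewrite map_poly_eq0 size_map_poly => /(_ d0) hs.
have h1 : ((size G).-1 < size d)%N.
  apply: hs => //; last exact: horb.
  by move=> i; rewrite coef_map hphi.
rewrite -dvdp_size_eqp // eqn_leq dvdp_leq //=.
by case: (size G) sG h1.
Qed.

Lemma order_alpha (F T : fieldType) (phi : {rmorphism F -> T}) f t a :
  irreducible_poly f -> poly_order f t -> root (map_poly phi f) a ->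
  a ^+ t = 1 /\ forall s, (0 < s)%N -> a ^+ s = 1 -> (t <= s)%N.
Proof.
move=> irr [t0 [ft tmin]] ra.
have mapX s : map_poly phi ('X^s - 1) = 'X^s - 1.
  by rewrite rmorphB rmorph1 /= map_polyXn.
split.
  have : root (map_poly phi ('X^t - 1)) a by apply: root_dvdp ra; rewrite dvdp_map.
  by rewrite mapX rootE !hornerE subr_eq0 => /eqP.
move=> s s0 hs; apply: tmin => //.
apply: (irr_root_dvd irr ra).
by rewrite mapX rootE !hornerE hs subrr.
Qed.

Lemma beta_props (T : fieldType) (a : T) e Q : (0 < e)%N ->
  a ^+ (e * (Q + 1)) = 1 -> (forall s, (0 < s)%N -> a ^+ s = 1 -> (e * (Q + 1) <= s)%N) ->
  (a ^+ e) ^+ Q.+1 = 1 /\ forall m, (0 < m <= Q)%N -> (a ^+ e) ^+ m != 1.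
Proof.
move=> e0 h1 hmin; split; first by rewrite -exprM -addn1.
move=> m /andP [m0 mQ]; apply/eqP; rewrite -exprM => /hmin.
rewrite muln_gt0 e0 m0 => /(_ isT); rewrite leq_pmul2l // addn1 ltnNge.
by rewrite mQ.
Qed.

Lemma partA (Fq : finFieldType) (q n e : nat) (f : {poly Fq})
  (hq : #|Fq| = q) (he : (0 < e)%N) (hirr : irreducible_poly f)
  (hord : poly_order f (e * (q ^ n + 1))) :
  (forall (K L : finFieldType) (iota : {rmorphism Fq -> K})
          (j : {rmorphism K -> L}) (alpha : L),
     #|K| = (q ^ n)%N -> #|L| = (q ^ (2 * n))%N ->
     root (map_poly (fun c => j (iota c)) f) alpha ->
     let beta := alpha ^+ e in
     exists a : K, j a = beta ^+ (q ^ n) + beta + 1 /\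
       irreducible_poly ('X^(q ^ n + 1) + 'X^(q ^ n) - a *: 'X + 1 : {poly K})).
Proof.
move=> K L iota j alpha hK hL ra beta.
case: (countable_algebraic_closure L) => C [iC _].
set Q := (q ^ n)%N in hK *.
have hQ : [pchar C].-nat Q by rewrite -hK (card_pchar_nat (iC \o j)).
have hQ2 : (1 < Q)%N by rewrite -hK finNzRing_gt1.
have ra' : root (map_poly (iC \o (j \o iota)) f) (iC alpha).
  by rewrite map_poly_comp rootE horner_map (rootP ra) rmorph0.
have [h1 hmin] := order_alpha hirr hord ra'.
have [hb1 hbm] := beta_props he h1 hmin.
have eb : iC beta = iC alpha ^+ e by rewrite rmorphXn.
rewrite -eb in hb1 hbm.
pose gL := beta ^+ Q + beta + 1.
have egL : iC gL = iC beta ^+ Q + iC beta + 1 by rewrite /gL !rmorphD rmorph1 rmorphXn.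
have gLQ : gL ^+ #|K| = gL.
  apply: (fmorph_inj iC); rewrite rmorphXn egL hK.
  exact: AQ.
have [a ea] := fixed_in_image j gLQ.
exists a; split; first exact: ea.
have sG : size ('X^(Q + 1) + 'X^Q - a *: 'X + 1 : {poly K}) = Q.+2.
  have s1 : size ('X^(Q + 1) + 'X^Q : {poly K}) = Q.+2.
    by rewrite size_polyDl !size_polyXn addn1.
  have s2 : size ('X^(Q + 1) + 'X^Q - a *: 'X : {poly K}) = Q.+2.
    rewrite size_polyDl ?s1 // size_polyN.
    by apply: leq_ltn_trans (size_scale_leq _ _) _; rewrite size_polyX ltnS ltnW.
  by rewrite size_polyDl ?s2 ?size_poly1.
apply: (irr_by_orbit (phi := iC \o j) hQ); first by rewrite sG.
  by move=> c /=; rewrite -!rmorphXn -hK expf_card.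
move=> x rx k; rewrite sG /= => hk.
apply: (core hQ hQ2 hb1 hbm) => //.
move: rx; rewrite rootE.
rewrite !rmorphD rmorphN /= !map_polyXn map_polyZ map_polyX rmorph1 /=.
rewrite !hornerE ea -egL addn1 => /eqP.
by rewrite /Gv.
Qed.

Section BC.
Variables (Fq : finFieldType) (q n e : nat) (f : {poly Fq}).
Hypotheses (hq : #|Fq| = q) (hn : (1 <= n)%N) (he : (0 < e)%N)
  (hirr : irreducible_poly f) (hord : poly_order f (e * (q ^ n + 1))).
Variables (C : closedFieldType) (phi : {rmorphism Fq -> C}) (alpha : C).
Hypothesis ra : root (map_poly phi f) alpha.

Local Notation Q := (q ^ n)%N.

Lemma hq1 : (1 < q)%N. Proof. by rewrite -hq finNzRing_gt1. Qed.
Lemma hqC : [pchar C].-nat q. Proof. by rewrite -hq (card_pchar_nat phi). Qed.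
Lemma hqk k : [pchar C].-nat (q ^ k)%N. Proof. by rewrite pnatX hqC. Qed.
Lemma hQC : [pchar C].-nat Q. Proof. exact: hqk. Qed.
Lemma hQ2 : (1 < Q)%N.
Proof. by have := ltn_exp2l 0 n hq1; rewrite expn0 => ->. Qed.

Let b := alpha ^+ e.
Lemma hb : b ^+ Q.+1 = 1 /\ forall m, (0 < m <= Q)%N -> b ^+ m != 1.
Proof.
have [h1 hmin] := order_alpha hirr hord ra.
exact: beta_props he h1 hmin.
Qed.
Lemma hb1 : b ^+ Q.+1 = 1. Proof. by case: hb. Qed.
Lemma hbm : forall m, (0 < m <= Q)%N -> b ^+ m != 1. Proof. by case: hb. Qed.

Let g := b ^+ Q + b + 1.
Lemma gQ : g ^+ Q = g. Proof. exact: (AQ hQC hb1). Qed.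

Lemma b0 : b != 0.
Proof. by apply: contra_eq_neq hb1 => ->; rewrite expr0n eq_sym oner_eq0. Qed.

Lemma g_conj r : (0 < r < n)%N -> g ^+ (q ^ r) != g.
Proof.
move=> /andP [r0 rn]; apply/eqP => eg.
pose s := b ^+ (q ^ r).
have es : g ^+ (q ^ r) = s ^+ Q + s + 1.
  change (frobN (hqk r) g = s ^+ Q + s + 1).
  by rewrite !rmorphD rmorph1 /= /frobN exprAC.
have e1 : s + s ^+ Q = b + b ^+ Q.
  by move: eg; rewrite es /g => /addIr; rewrite addrC [b + _]addrC.
have ss : s * s ^+ Q = 1 by rewrite -exprS exprAC hb1 expr1n.
have bb : b * b ^+ Q = 1 by rewrite -exprS hb1.
have := @idconj _ _ _ _ _ _ _ (mc_ring C) s (s ^+ Q) b (b ^+ Q).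
rewrite /= ss bb e1 !subrr !mulr0 subr0 addr0 ; rewrite [b + b ^+ Q]addrC addrK subrr mulr0 => /eqP; rewrite mulf_eq0 !subr_eq0.
have qr1 : (1 < q ^ r)%N by have := ltn_exp2l 0 r hq1; rewrite expn0 => ->.
have qrn : (q ^ r < Q)%N by rewrite ltn_exp2l ?hq1.
case/orP => /eqP es2.
  have : b ^+ (q ^ r - 1) * b = 1 * b.
    by rewrite -exprSr subn1 prednK ?es2 ?mul1r // ltnW.
  move/(mulIf b0)/eqP; apply/negP/hbm.
  by rewrite subn_gt0 qr1 /= (leq_trans (leq_subr _ _)) // ltnW.
move: es2; rewrite /s -exprSr; apply/eqP/hbm; by rewrite /= qrn.
Qed.

Local Notation R := (('X^(e * q ^ n) + 'X^e + 1) %% f).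

Lemma Rval : (map_poly phi R).[alpha] = g.
Proof.
set h := ('X^(e * q ^ n) + 'X^e + 1 : {poly Fq}).
have -> : h %% f = h - h %/ f * f by rewrite {2}(divp_eq h f) addrAC subrr add0r.
rewrite rmorphB rmorphM /= hornerD hornerN hornerM (rootP ra) mulr0 subr0.
rewrite /h !rmorphD rmorph1 /= !map_polyXn !hornerE.
by rewrite exprM.
Qed.

Lemma dvd_iff (h : {poly Fq}) : f %| h \Po R <-> root (map_poly phi h) g.
Proof.
split=> [d|rh].
  have d' : map_poly phi f %| map_poly phi (h \Po R) by rewrite dvdp_map.
  have := root_dvdp d' ra.
  by rewrite map_comp_poly rootE horner_comp Rval.
apply: (irr_root_dvd hirr ra).
by rewrite map_comp_poly rootE horner_comp Rval.
Qed.

Lemma fix_coef (h : {poly Fq}) i : (map_poly phi h)`_i ^+ q = (map_poly phi h)`_i.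
Proof. by rewrite coef_map -rmorphXn -hq expf_card. Qed.

Local Notation rs := (mkseq (fun k => g ^+ (q ^ k)) n).

Lemma rs_uniq : uniq rs.
Proof. by apply: (orbit_uniq hqC) => k hk; apply: g_conj. Qed.

Lemma rs_root (P : {poly C}) : (forall i, P`_i ^+ q = P`_i) -> root P g -> all (root P) rs.
Proof. by move=> hP Pg; apply/allP => y /mapP [k _ ->]; apply: (frob_root_iter hqC). Qed.

Lemma g_in_rs : g \in rs.
Proof. by apply/mapP; exists 0%N; rewrite ?mem_iota ?expn0 ?expr1 //= add0n; case: n hn. Qed.

Local Notation Pc := (\prod_(z <- rs) ('X - z%:P) : {poly C}).

Lemma Pc_fix i : Pc`_i ^+ q = Pc`_i.
Proof.
have E : map_poly (frobN hqC) Pc = Pc.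
  rewrite rmorph_prod /=.
  under eq_bigr do rewrite map_polyXsubC.
  rewrite -(big_map (frobN hqC) xpredT (fun z => 'X - z%:P)).
  apply: perm_big.
  have [n' en] : exists n', n = n'.+1 by exists n.-1; rewrite prednK.
  rewrite /mkseq -map_comp.
  have -> : [seq (frobN hqC \o (fun k => g ^+ (q ^ k))) i | i <- iota 0 n] =
            [seq g ^+ (q ^ k.+1) | k <- iota 0 n].
    by apply: eq_map => k /=; rewrite /frobN -exprM expnSr.
  have L1 : [seq g ^+ (q ^ k.+1) | k <- iota 0 n] = rcons [seq g ^+ (q ^ k.+1) | k <- iota 0 n'] g.
    by rewrite en -addn1 iotaD map_cat /= add0n -en gQ cats1.
  have L2 : [seq g ^+ (q ^ k) | k <- iota 0 n] = g :: [seq g ^+ (q ^ k.+1) | k <- iota 0 n'].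
    by rewrite en -add1n iotaD map_cat /= expn0 expr1 (iotaDl 1 0) -map_comp.
  by rewrite L1 L2 perm_rcons.
by rewrite -{2}E coef_map.
Qed.

Definition pre (c : C) : Fq := odflt 0 [pick a | phi a == c].

Lemma pre_ok c : (exists a, phi a = c) -> phi (pre c) = c.
Proof.
move=> [a ea]; rewrite /pre; case: pickP => [a' /eqP //|H].
by move: (H a); rewrite ea eqxx.
Qed.

Lemma exists_P0 : exists P0 : {poly Fq}, size P0 = n.+1 /\ root (map_poly phi P0) g.
Proof.
pose P0 := \poly_(i < n.+1) pre Pc`_i.
have sPc : size Pc = n.+1 by rewrite size_prod_XsubC size_mkseq.
have E : map_poly phi P0 = Pc.
  apply/polyP => i; rewrite coef_map coef_poly; case: ifP => hi.
    by apply: pre_ok; apply: fixed_in_image; rewrite hq Pc_fix.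
  by rewrite raddf0 nth_default // sPc leqNgt hi.
exists P0; split; first by rewrite -(size_map_poly phi) E.
by rewrite E root_prod_XsubC g_in_rs.
Qed.

Variable psi : {poly Fq}.
Hypotheses (hpm : psi \is monic) (hpd : f %| psi \Po R)
  (hpmin : forall g0 : {poly Fq}, g0 != 0 -> f %| g0 \Po R -> (size psi <= size g0)%N).

Lemma psi_root : root (map_poly phi psi) g.
Proof. exact/dvd_iff. Qed.

Lemma psi0 : psi != 0. Proof. exact: monic_neq0. Qed.

Lemma psi_size : size psi = n.+1.
Proof.
apply/eqP; rewrite eqn_leq; apply/andP; split.
  have [P0 [sP0 rP0]] := exists_P0.
  rewrite -sP0; apply: hpmin; first by rewrite -size_poly_eq0 sP0.
  exact/dvd_iff.
rewrite -(size_map_poly phi); apply: (orbit_size hqC).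
- by rewrite map_poly_eq0 psi0.
- exact: fix_coef.
- exact: psi_root.
- by move=> k hk; apply: g_conj.
Qed.

Lemma psi_prod : map_poly phi psi = Pc.
Proof.
rewrite [LHS](@all_roots_prod_XsubC _ _ rs).
- by rewrite lead_coef_map (monicP hpm) rmorph1 scale1r.
- by rewrite size_map_poly psi_size size_mkseq.
- apply: rs_root; [exact: fix_coef | exact: psi_root].
- by rewrite uniq_rootsE rs_uniq.
Qed.

Lemma psi_irr : irreducible_poly psi.
Proof.
split; first by rewrite psi_size ltnS.
move=> d sd dpsi.
have d0 : d != 0 by apply: contraNneq psi0 => e0; move: dpsi; rewrite e0 dvd0p.
pose c := psi %/ d.
have ec : psi = c * d by rewrite divpK.
have c0 : c != 0 by apply: contraNneq psi0 => e0; rewrite ec e0 mul0r.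
case: (eqVneq (size c) 1) => sc.
  move/eqP: sc => /size_poly1P [c1 c10 ec1].
  by rewrite ec ec1 mul_polyC eqp_sym eqp_scale.
exfalso.
have sc2 : (1 < size c)%N by rewrite ltn_neqAle eq_sym sc lt0n size_poly_eq0 c0.
have sd2 : (1 < size d)%N by rewrite ltn_neqAle eq_sym sd lt0n size_poly_eq0 d0.
have spsi : size psi = (size c + size d).-1 by rewrite ec size_mul.
have := psi_root; rewrite ec rmorphM rootE hornerM mulf_eq0 => /orP [] hr.
  have := hpmin c0 ((dvd_iff c).2 hr); rewrite spsi.
  by case: (size d) sd2 => [|[|k]] // _; rewrite addnS /= leqNgt -{1}[size c]addn0 ltn_add2l.
have := hpmin d0 ((dvd_iff d).2 hr); rewrite spsi.
by case: (size c) sc2 => [|[|k]] // _; rewrite addSn /= leqNgt -{1}[size d]add0n ltn_add2r.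
Qed.

Local Notation Qp := ('X^(q ^ n + 1) + 'X^(q ^ n) + 1 : {poly Fq}).
Local Notation F := (homog_comp n psi Qp).
Definition Qv (x : C) := x ^+ (Q + 1) + x ^+ Q + 1.

Lemma size_Qp : size Qp = Q.+2.
Proof.
have s1 : size ('X^(Q + 1) + 'X^Q : {poly Fq}) = Q.+2.
  by rewrite size_polyDl !size_polyXn addn1.
by rewrite size_polyDl ?s1 ?size_poly1.
Qed.

Lemma psi_n : psi`_n = 1.
Proof. by have := monicP hpm; rewrite /lead_coef psi_size. Qed.

Lemma F_size : size F = (n * (Q + 1)).+1.
Proof.
have Qp0 : Qp != 0 by rewrite -size_poly_eq0 size_Qp.
have sQn u : size (Qp ^+ u) = (u * Q.+1).+1.
  have e0 := size_exp Qp u; rewrite size_Qp /= in e0.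
  by rewrite mulnC -e0 prednK // lt0n size_poly_eq0 expf_neq0.
rewrite /homog_comp big_ord_recr /= subnn expr0 mulr1 psi_n scale1r.
rewrite addrC size_polyDl sQn; first by rewrite addn1.
apply: leq_ltn_trans (size_sum _ _ _) _.
rewrite ltnS; apply/bigmax_leqP => u _.
apply: leq_trans (size_scale_leq _ _) _.
apply: leq_trans (size_mul_leq _ _) _.
rewrite sQn size_polyXn.
have hu := ltn_ord u.
have hQ := hQ2.
move: (nat_of_ord u) hu hQ => v; clear.
move=> hv hQ.
move/ltP: hv => hv; move/ltP: hQ => hQ; apply/leP.
rewrite -?plusE -?multE -?minusE. nia.
Qed.

Lemma F_horner x : (map_poly phi F).[x] =
  \sum_(u < n.+1) phi psi`_u * (Qv x) ^+ u * x ^+ (n - u).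
Proof.
rewrite /homog_comp rmorph_sum horner_sum; apply: eq_bigr => u _.
rewrite /= map_polyZ hornerZ rmorphM rmorphXn /= !rmorphD rmorph1 /= !map_polyXn.
by rewrite hornerM horner_exp !hornerE.
Qed.

Lemma F_at0 : (map_poly phi F).[0] != 0.
Proof.
rewrite F_horner big_ord_recr /= subnn expr0 mulr1 psi_n rmorph1 mul1r.
rewrite big1 ?add0r; last first.
  move=> u _; rewrite expr0n subn_eq0 leqNgt ltn_ord /= mulr0 //.
have Q0 : (Q == 0)%N = false by apply/negbTE; rewrite -lt0n ltnW // hQ2.
by rewrite /Qv !expr0n addn1 /= Q0 add0r add0r expr1n oner_eq0.
Qed.

Lemma F_root_psi x : root (map_poly phi F) x -> x != 0 /\ root (map_poly phi psi) (Qv x / x).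
Proof.
move=> rx.
have x0 : x != 0 by apply: contraTneq rx => ->; rewrite rootE F_at0.
split => //.
move: rx; rewrite !rootE F_horner.
have -> : \sum_(u < n.+1) phi psi`_u * Qv x ^+ u * x ^+ (n - u) =
          x ^+ n * (map_poly phi psi).[Qv x / x].
  rewrite horner_coef size_map_poly psi_size mulr_sumr; apply: eq_bigr => u _.
  rewrite coef_map /=.
  have hu : (u <= n)%N by rewrite -ltnS ltn_ord.
  have ex : x ^+ n = x ^+ u * x ^+ (n - u) by rewrite -exprD subnKC.
  rewrite exprMn exprVn ex.
  apply/eqP; rewrite -subr_eq0; apply/eqP.
  rewrite (@idterm _ _ _ _ _ _ _ (mc_ring C)) /=.
  by rewrite mulfV ?subrr ?mulr0 // expf_neq0.
by rewrite mulf_eq0 expf_eq0 (negbTE x0) andbF.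
Qed.

Lemma giter s : g ^+ (Q ^ s) = g.
Proof. by elim: s => [|s IH]; rewrite ?expn0 ?expr1 // expnSr exprM IH gQ. Qed.

Lemma orbit_F x : root (map_poly phi F) x ->
  forall m, (0 < m < n * (Q + 1))%N -> x ^+ (q ^ m) != x.
Proof.
move=> rx; have [x0 rw] := F_root_psi rx.
set w := Qv x / x in rw.
move: rw; rewrite psi_prod root_prod_XsubC => /mapP [k]; rewrite mem_iota add0n => /andP [_ kn] ew.
pose bk := b ^+ (q ^ k).
have hbk1 : bk ^+ Q.+1 = 1 by rewrite /bk exprAC hb1 expr1n.
have hbkm : forall m, (0 < m <= Q)%N -> bk ^+ m != 1.
  move=> m hm; apply/eqP; rewrite /bk exprAC -(expr1n C (q ^ k)) => /(frob_inj (hqk k)).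
  by apply/eqP/hbm.
have Abk : bk ^+ Q + bk + 1 = w.
  rewrite ew; change (bk ^+ Q + bk + 1 = frobN (hqk k) g).
  by rewrite !rmorphD rmorph1 /= /frobN /bk exprAC.
have wx : w * x = Qv x by rewrite /w divfK.
have Gx : Gv Q (bk ^+ Q + bk + 1) x = 0.
  move: wx; rewrite /Qv => wx.
  by rewrite Abk /Gv -addn1 addrAC wx subrr.
have hc := core hQC hQ2 hbk1 hbkm Gx.
move=> m /andP [m0 mlt]; apply/eqP => exm.
have ww : w ^+ (q ^ m) = w.
  change (frobN (hqk m) w = w).
  rewrite /w /Qv rmorphM fmorphV !rmorphD rmorph1 /= /frobN.
  by rewrite exprAC exm [x ^+ Q ^+ _]exprAC exm.
have gm : g ^+ (q ^ m) = g.
  move: ww; rewrite ew exprAC => /(frob_inj (hqk k)).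
  done.
have n0 : (0 < n)%N := hn.
have em := divn_eq m n.
have gr : g ^+ (q ^ (m %% n)) = g.
  move: gm; rewrite {1}em expnD exprM mulnC expnM giter.
  done.
set s := (m %/ n)%N in em.
case: (posnP (m %% n)%N) => hr; last first.
  by move/eqP: gr; apply/negP/g_conj; rewrite hr ltn_pmod.
rewrite hr addn0 in em.
have s0 : (0 < s)%N by move: m0; rewrite em muln_gt0 => /andP [].
have sQ : (s <= Q)%N.
  have : (s * n < (Q + 1) * n)%N by rewrite -em mulnC.
  by rewrite ltn_pmul2r // addn1 ltnS.
move: exm; rewrite em mulnC expnM => /eqP.
by apply/negP/hc; rewrite s0.
Qed.

Lemma F_irr : irreducible_poly F.
Proof.
apply: (irr_by_orbit (phi := phi) hqC).
- by rewrite F_size ltnS muln_gt0 hn addn1.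
- by move=> c; rewrite -rmorphXn -hq expf_card.
- by move=> x rx k; rewrite F_size /=; apply: orbit_F.
Qed.

End BC.

Theorem mainTheorem11 (Fq : finFieldType) (q n e : nat) (f : {poly Fq})
  (hq : #|Fq| = q) (hn : (1 <= n)%N) (he : (0 < e)%N)
  (hmon : f \is monic) (hirr : irreducible_poly f)
  (hdeg : size f = (2 * n).+1)
  (hord : poly_order f (e * (q ^ n + 1))) :
  (* (a) *)
  (forall (K L : finFieldType) (iota : {rmorphism Fq -> K})
          (j : {rmorphism K -> L}) (alpha : L),
     #|K| = (q ^ n)%N -> #|L| = (q ^ (2 * n))%N ->
     root (map_poly (fun c => j (iota c)) f) alpha ->
     let beta := alpha ^+ e in
     exists a : K, j a = beta ^+ (q ^ n) + beta + 1 /\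
       irreducible_poly ('X^(q ^ n + 1) + 'X^(q ^ n) - a *: 'X + 1 : {poly K}))
  /\
  (* (b) and (c) *)
  (forall psi : {poly Fq},
     let R := ('X^(e * q ^ n) + 'X^e + 1) %% f in
     psi \is monic -> f %| psi \Po R ->
     (forall g : {poly Fq}, g != 0 -> f %| g \Po R -> (size psi <= size g)%N) ->
     (irreducible_poly psi /\ size psi = n.+1) /\
     (let F := homog_comp n psi ('X^(q ^ n + 1) + 'X^(q ^ n) + 1) in
      irreducible_poly F /\ size F = (n * (q ^ n + 1)).+1)).
Proof.
split; first exact: (partA hq he hirr hord).
move=> psi R hpm hpd hpmin.
case: (countable_algebraic_closure Fq) => C [phi _].
have [alpha ra] : exists alpha, root (map_poly phi f) alpha.
  by apply/closed_rootP; rewrite size_map_poly hdeg eqSS -lt0n muln_gt0 hn.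
split; first split.
- exact: (psi_irr hq hn he hirr hord ra hpm hpd hpmin).
- exact: (psi_size hq hn he hirr hord ra hpm hpd hpmin).
- split.
  + exact: (F_irr hq hn he hirr hord ra hpm hpd hpmin).
  + exact: (F_size hq hn he hirr hord ra hpm hpd hpmin).
Qed.
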